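(* Let $d\in\mathbb{N}$, $n\geq 3$, and let $k$ be a nonnegative integer with $k\leq \frac{n}{4d+6}-d-5$. Let $G$ and $H$ be graphs on $n$ vertices, each with average degree at most $d$. Suppose there are distinct vertices $u_1,\dots,u_{n-k}$ of $G$ and distinct vertices $w_1,\dots,w_{n-k}$ of $H$ such that $G-u_i\cong H-w_i$ for every $i\in[n-k]$. Then $|E(G)|=|E(H)|$. (That is, the number of edges of a graph with average degree at most $d$ can be reconstructed from any deck missing at most $\frac{n}{4d+6}-d-5$ cards.)
   Context: All graphs are finite, simple and undirected. For a graph $G$ and $v\in V(G)$, the card $G-v$ is the graph obtained by deleting $v$ and all edges incident to it; the deck of $G$ is the multiset of unlabelled cards $G-v$, $v\in V(G)$. The average degree of an $n$-vertex graph with $m$ edges is $2m/n$. *)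

(* Defs.v *)
From mathcomp Require Import all_boot all_order all_algebra.
Set Implicit Arguments. Unset Strict Implicit. Unset Printing Implicit Defensive.

Record sgraph (n : nat) := SGraph {
  adj : rel 'I_n;
  adj_sym : symmetric adj;
  adj_irr : irreflexive adj }.

Definition nedges n (G : sgraph n) : nat :=
  #|[set p : 'I_n * 'I_n | (p.1 < p.2)%N && adj G p.1 p.2]|.

(* The card G - u is isomorphic to the card H - w: there is a bijection
   from V(G) \ {u} onto V(H) \ {w} preserving adjacency and non-adjacency.
   Such a bijection is encoded as a bijection f of 'I_n with f u = w. *)
Definition card_iso n (G : sgraph n) (u : 'I_n) (H : sgraph n) (w : 'I_n) : Prop :=
  exists f : 'I_n -> 'I_n,
    [/\ bijective f, f u = w &
        forall x y, x != u -> y != u -> adj H (f x) (f y) = adj G x y].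

(* Main.v *)
Require Import Defs.
From mathcomp Require Import all_boot all_order all_algebra.
Import GRing.Theory Num.Theory.
From mathcomp Require Import zify lra.
Set Implicit Arguments. Unset Strict Implicit.

Section S.
Variable n : nat.
Implicit Types G H : sgraph n.

Definition deg G (x : 'I_n) : nat := \sum_(y < n) adj G x y.
Definition cdeg G (u x : 'I_n) : nat := \sum_(y < n | y != u) adj G x y.

Lemma deg_split G u x : deg G x = cdeg G u x + adj G x u.
Proof. by rewrite /deg (bigD1 u) //= addnC. Qed.

Lemma handshake G : \sum_x deg G x = 2 * nedges G.
Proof.
have E : \sum_x deg G x = \sum_(x < n) \sum_(y < n) (((x < y) && adj G x y) + ((y < x) && adj G x y)).
  apply: eq_bigr => x _; apply: eq_bigr => y _.
  case: (ltngtP x y) => [h|h|/val_inj ->]; rewrite ?adj_irr //=; lia.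
rewrite E.
under eq_bigr => x _ do rewrite big_split /=.
rewrite big_split /= [X in _ + X]exchange_big /=.
rewrite [X in _ + X = _](_ : _ = \sum_(i < n) \sum_(j < n) ((i < j) && adj G i j)); last first.
  apply: eq_bigr => i _; apply: eq_bigr => j _; by rewrite adj_sym.
rewrite addnn -mul2n; congr (2 * _).
rewrite /nedges -sum1_card pair_big /= [RHS]big_mkcond /=.
apply: eq_bigr => p _; rewrite in_set; by case: (_ && _).
Qed.

Lemma sum_cdeg G u : \sum_(x | x != u) cdeg G u x + 2 * deg G u = 2 * nedges G.
Proof.
rewrite -handshake [RHS](bigD1 u) //=.
have -> : \sum_(x | x != u) deg G x = \sum_(x | x != u) cdeg G u x + \sum_(x | x != u) adj G x u.
  by rewrite -big_split; apply: eq_bigr => x _; rewrite (deg_split G u).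
have : \sum_x (adj G x u : nat) = deg G u.
  by apply: eq_bigr => x _; rewrite adj_sym.
rewrite (bigD1 u) //= adj_irr add0n => ->. lia.
Qed.

Lemma card_sum_iso G H u w (psi : nat -> nat) : card_iso G u H w ->
  \sum_(x | x != u) psi (cdeg G u x) = \sum_(y | y != w) psi (cdeg H w y).
Proof.
case=> f [fbij fu hadj].
have finj := bij_inj fbij.
have Hne x : (f x != w) = (x != u) by rewrite -fu (inj_eq finj).
rewrite [RHS](reindex f) /=; last by apply: onW_bij.
apply: eq_big => x; first by rewrite Hne.
move=> xu; congr psi; rewrite /cdeg [RHS](reindex f) /=; last by apply: onW_bij.
apply: eq_big => y; first by rewrite Hne.
by move=> yu; rewrite hadj.
Qed.

Lemma card_iso_sym G H u w : card_iso G u H w -> card_iso H w G u.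
Proof.
case=> f [[g fg gf] fu hadj].
exists g; split.
- by exists f.
- by rewrite -fu fg.
- move=> x y xw yw.
  have gne z : z != w -> g z != u.
    by move=> zw; apply: contra zw => /eqP hz; rewrite -fu -hz gf.
  by rewrite -hadj ?gne // !gf.
Qed.

Lemma PG_bound G u T : deg G u <= T ->
  \sum_x (deg G x - T) <= \sum_(x | x != u) (cdeg G u x - T) + deg G u.
Proof.
move=> hu; rewrite (bigD1 u) //=.
have -> : deg G u - T = 0 by lia.
rewrite add0n.
have : \sum_x (adj G x u : nat) = deg G u.
  by apply: eq_bigr => x _; rewrite adj_sym.
rewrite (bigD1 u) //= adj_irr add0n => <-.
rewrite -big_split /=; apply: leq_sum => x _; rewrite (deg_split G u). lia.
Qed.

Lemma PH_bound H w T :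
  \sum_(y | y != w) (cdeg H w y - T) <= \sum_y (deg H y - T).
Proof.
rewrite [X in _ <= X](bigD1 w) //=.
apply: leq_trans (leq_addl _ _).
apply: leq_sum => y _; rewrite (deg_split H w). lia.
Qed.

End S.

Lemma ratconv d n k : ((k%:R : rat) <= (n%:R / (4 * d + 6)%:R) - d%:R - 5)%R ->
  ((k + d + 5) * (4 * d + 6) <= n)%N.
Proof.
move=> h.
have h46 : (0 < (4 * d + 6)%:R :> rat)%R by rewrite ltr0n addn_gt0 orbT.
have : ((k + d + 5)%:R <= (n%:R / (4 * d + 6)%:R : rat))%R.
  move: h; set q := (_ / _)%R; rewrite !natrD; lra.
rewrite ler_pdivlMr // -natrM ler_nat //.
Qed.

Set Implicit Arguments. Unset Strict Implicit.

Lemma split_sum n m (u : 'I_m -> 'I_n) (F : 'I_n -> nat) : injective u ->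
  \sum_x F x = \sum_i F (u i) + \sum_(x in ~: [set u i | i in [set: 'I_m]]) F x.
Proof.
move=> uinj.
rewrite (bigID (mem [set u i | i in [set: 'I_m]])) /=.
congr (_ + _).
  transitivity (\sum_(x in [set u i | i in [set: 'I_m]]) F x); first by apply: eq_bigl.
  rewrite big_imset /=; last by move=> x y _ _; apply: uinj.
  by apply: eq_bigl => i; rewrite in_setT.
by apply: eq_bigl => x; rewrite in_setC.
Qed.

Lemma card_Z n m (u : 'I_m -> 'I_n) : injective u -> m <= n ->
  #|~: [set u i | i in [set: 'I_m]]| = n - m.
Proof.
move=> uinj hm; have := cardsC [set u i | i in [set: 'I_m]].
rewrite card_imset // cardsT !card_ord. lia.
Qed.

Lemma arith1 d n k e SA MG mG : (k+d+5)*(4*d+6) <= n -> e + k = n -> e*(d+1) <= SA ->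
  2*mG = SA + MG -> 2*mG <= d*n -> False.
Proof. move=> *. nia. Qed.
Lemma arith2 d n k e N SA MG mG : (k+d+5)*(4*d+6) <= n -> e + k = n -> (2*d+1)*N <= SA ->
  2*mG = SA + MG -> 2*mG <= d*n -> 2*d*k + d < e - k - 2 - N.
Proof. move=> hn he h9 h1 hG.
have hm := leq_mul (leqnn (d + 1)) hn.
have : (2 * d + 1) * (2 * d * k + d + 3 + 3 * k + N) <= (2 * d + 1) * n by nia.
rewrite leq_pmul2l => [h|]; lia. Qed.
Lemma arith3 d k e N mG mH SA SB MG MH SAT SBT ZGT ZHT del T :
  mG < mH -> del = mH - mG -> T = 2*d + del ->
  2*mG = SA + MG -> 2*mH = SB + MH -> SB = SA + e*del ->
  MG <= ZGT + k*T -> ZHT <= MH -> SBT <= SAT + del*N ->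
  SAT + ZGT <= SBT + ZHT + d -> 2*d*k + d < e - k - 2 - N -> False.
Proof.
move=> hlt hdel hT h1 h2 h3 h6 h7 h8 h10 hX.
set Y := e - k - 2 - N.
have hY : e = Y + k + 2 + N by rewrite /Y; lia.
have : Y <= del * Y by rewrite leq_pmull //; lia.
have E1 : e * del = del * Y + del * k + 2 * del + del * N by rewrite hY; lia.
have E2 : k * T = 2 * d * k + del * k by rewrite hT; lia.
clearbody Y. lia.
Qed.

Lemma main_dir d n k (G H : sgraph n) (u w : 'I_(n - k) -> 'I_n) :
  (k + d + 5) * (4 * d + 6) <= n ->
  2 * nedges G <= d * n ->
  injective u -> injective w ->
  (forall i, card_iso G (u i) H (w i)) ->
  nedges G < nedges H -> False.
Proof.
move=> hn hG uinj winj hiso hlt.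
set mG := nedges G; set mH := nedges H.
set e := n - k.
have hn' : (k + d + 5) * (4 * d + 6) = k * (4 * d + 6) + (d + 5) * (4 * d + 6) by rewrite -addnA mulnDl.
have hk : k <= n by move: hn; clear; nia.
have he : e + k = n by rewrite /e; lia.
set a := fun i => deg G (u i).
set b := fun i => deg H (w i).
have hab i : mG + b i = mH + a i.
  have := card_sum_iso (fun t => t) (hiso i).
  have := sum_cdeg G (u i); have := sum_cdeg H (w i).
  rewrite /mG /mH /a /b; lia.
set del := mH - mG.
have hb i : b i = a i + del by have := hab i; rewrite /del; lia.
set ZG := ~: [set u i | i in [set: 'I_e]].
set ZH := ~: [set w i | i in [set: 'I_e]].
have cZG : #|ZG| = k by rewrite card_Z //; rewrite /e; lia.
set SA := \sum_i a i.
set SB := \sum_i b i.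
set MG := \sum_(x in ZG) deg G x.
set MH := \sum_(x in ZH) deg H x.
have h1 : 2 * mG = SA + MG by rewrite -handshake (split_sum _ uinj).
have h2 : 2 * mH = SB + MH by rewrite -handshake (split_sum _ winj).
have h3 : SB = SA + e * del.
  rewrite /SB /SA (eq_bigr _ (fun i _ => hb i)) big_split /= sum_nat_const card_ord //.
set T := 2 * d + del.
set SAT := \sum_i (a i - T).
set SBT := \sum_i (b i - T).
set ZGT := \sum_(x in ZG) (deg G x - T).
set ZHT := \sum_(x in ZH) (deg H x - T).
have h4 : \sum_x (deg G x - T) = SAT + ZGT by rewrite (split_sum _ uinj).
have h5 : \sum_x (deg H x - T) = SBT + ZHT by rewrite (split_sum _ winj).
have h6 : MG <= ZGT + k * T.
  rewrite -cZG -sum_nat_const -big_split /=; apply: leq_sum => x _; lia.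
have h7 : ZHT <= MH by apply: leq_sum => x _; lia.
set N := \sum_i (2 * d < a i : nat).
have h8 : SBT <= SAT + del * N.
  rewrite /SBT /SAT /N big_distrr -big_split /=; apply: leq_sum => i _.
  rewrite hb /T; case: ltnP => /= h; lia.
have h9 : (2 * d + 1) * N <= SA.
  rewrite /N /SA big_distrr; apply: leq_sum => i _; case: ltnP => /= h; lia.
have [i0 hi0 | hall] := pickP (fun i => a i <= d); last first.
  have : \sum_(i < e) (d + 1) <= SA.
    by apply: leq_sum => i _; have := hall i; rewrite /=; lia.
  rewrite sum_nat_const card_ord => hS.
  exact: (arith1 hn he hS h1 hG).
have h10 : \sum_x (deg G x - T) <= \sum_x (deg H x - T) + d.
  apply: leq_trans (PG_bound (u := u i0) (T := T) _) _; first by rewrite /T; move: hi0; rewrite /a /=; lia.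
  rewrite (card_sum_iso (fun t => t - T) (hiso i0)).
  have := PH_bound H (w i0) T; move: hi0; rewrite /a /=; lia.
rewrite h4 h5 in h10.
exact: (arith3 hlt erefl erefl h1 h2 h3 h6 h7 h8 h10 (arith2 hn he h9 h1 hG)).
Qed.

Unset Implicit Arguments.

Theorem theorem1p3 (d n k : nat) (G H : sgraph n)
  (u w : 'I_(n - k) -> 'I_n) :
  (3 <= n)%N ->
  ((k%:R : rat) <= (n%:R / (4 * d + 6)%:R) - d%:R - 5)%R ->
  (2 * nedges G <= d * n)%N ->
  (2 * nedges H <= d * n)%N ->
  injective u -> injective w ->
  (forall i, card_iso G (u i) H (w i)) ->
  nedges G = nedges H.
Proof.
move=> _ hq hG hH uinj winj hiso.
have hn := ratconv hq.
case: (ltngtP (nedges G) (nedges H)) => // hlt.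
- by case: (main_dir hn hG uinj winj hiso hlt).
- have hiso' i : card_iso H (w i) G (u i) by apply: card_iso_sym.
  by case: (main_dir hn hH winj uinj hiso' hlt).
Qed.
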